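(* Let $R$ be a discrete valuation ring with maximal ideal $\mathfrak m$, fraction field $F$ and valuation $\mathrm{ord}$. For integers $m\ge1$, $n\ge1$ let $K^M_n(F,m)$ be the subgroup of $K^M_n(F)$ generated by the Milnor symbols $\{y_1,\dots,y_n\}$ ($y_i\in F^\times$) with $\sum_{i=1}^n\mathrm{ord}(y_i-1)\ge m$. Then for every $n\ge0$, $$K^M_{n+1}(F,m)\subseteq(1+\mathfrak m^m)K^M_n(F).$$
   Context: $(1+\mathfrak m^m)K^M_n(F)$ denotes the subgroup of $K^M_{n+1}(F)$ generated by the products $\{u\}\cdot x$ with $u\in 1+\mathfrak m^m$ and $x\in K^M_n(F)$; for $n=0$ it is the image of $1+\mathfrak m^m$ in $K^M_1(F)=F^\times$. Convention $\mathrm{ord}(0)=\infty$. *)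

(* Defs.v *)
From HB Require Import structures.
From mathcomp Require Import all_boot all_order all_algebra.
From mathcomp Require Import ring_quotient generic_quotient.
From mathcomp Require Import boolp.
From mathcomp Require Import freeg.

Set Implicit Arguments.
Unset Strict Implicit.
Unset Printing Implicit Defensive.

Import Order.TTheory GRing.Theory Num.Theory.
Local Open Scope ring_scope.
Local Open Scope quotient_scope.

Definition zspan (G : zmodType) (S : G -> Prop) : G -> Prop :=
  fun x => forall H : G -> Prop,
    H 0 -> (forall a b, H a -> H b -> H (a - b)) ->
    (forall a, S a -> H a) -> H x.

Lemma zspan0 (G : zmodType) (S : G -> Prop) : zspan S 0.
Proof. by move=> H H0. Qed.

Lemma zspanB (G : zmodType) (S : G -> Prop) a b :
  zspan S a -> zspan S b -> zspan S (a - b).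
Proof. rewrite /zspan => Ha Hb H H0 HBB HS; apply: (HBB); [exact: (Ha H H0 HBB HS)|exact: (Hb H H0 HBB HS)]. Qed.

Section Milnor.
Variable F : fieldType.

Definition Fx := {x : F | x != 0}.

Definition fxmul (a b : Fx) : Fx :=
  exist _ (val a * val b) (mulf_neq0 (valP a) (valP b)).

Definition tset n (t : n.-tuple Fx) (i : 'I_n) (c : Fx) : n.-tuple Fx :=
  [tuple if j == i then c else tnth t j | j < n].

(* free abelian group on n-tuples of elements of F^x,
   i.e. (a presentation of) the n-fold tensor power of F^x as a Z-module
   before imposing multilinearity *)
Definition Free n := {freeg (n.-tuple Fx) / int}.

Definition milnor_relgen n (x : Free n) : Prop :=
  (exists (t : n.-tuple Fx) (i : 'I_n) (a b : Fx),
      x = << tset t i (fxmul a b) >> - << tset t i a >> - << tset t i b >>)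
  \/ (exists (t : n.-tuple Fx) (i j : 'I_n),
      (j = i.+1 :> nat) /\ val (tnth t i) + val (tnth t j) = 1 /\ x = << t >>).

Definition milnor_rel n : {pred Free n} :=
  fun x => `[< zspan (@milnor_relgen n) x >].

Lemma milnor_rel_closed n : GRing.zmod_closed (@milnor_rel n).
Proof.
split; first by apply/asboolP; exact: zspan0.
by move=> a b /asboolP Ha /asboolP Hb; apply/asboolP; exact: zspanB.
Qed.

HB.instance Definition _ n :=
  GRing.isZmodClosed.Build (Free n) (@milnor_rel n) (milnor_rel_closed n).

Definition KM n := Quotient.quot (@milnor_rel n).

Definition msym n (t : n.-tuple Fx) : KM n := \pi_(KM n) (<< t >>).

Definition lmul_free n (u : Fx) (z : Free n) : Free n.+1 :=
  fglift (fun t : n.-tuple Fx => << [tuple of u :: t] >> : Free n.+1) z.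

Definition lmul n (u : Fx) (z : Free n) : KM n.+1 := \pi_(KM n.+1) (lmul_free u z).

End Milnor.

(* Discrete valuations.  ord : F -> int is the normalized discrete
   valuation on F^x (its value at 0 is irrelevant; ord(0) = +oo is
   handled explicitly below). The DVR is R = {x | x = 0 \/ 0 <= ord x},
   with maximal ideal m = {x | x = 0 \/ 1 <= ord x}, m^k = {x | x = 0 \/ k <= ord x}. *)
Definition discrete_valuation (F : fieldType) (ord : F -> int) : Prop :=
  [/\ (forall x y : F, x != 0 -> y != 0 -> ord (x * y) = ord x + ord y),
      (forall x y : F, x != 0 -> y != 0 -> x + y != 0 ->
                         Num.min (ord x) (ord y) <= ord (x + y))
    & (exists p : F, p != 0 /\ ord p = 1)].

(* x \in m^k (with the convention ord 0 = +oo) *)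
Definition in_mpow (F : fieldType) (ord : F -> int) (k : nat) (x : F) : Prop :=
  x = 0 \/ (k%:Z <= ord x).

(* sum_i ord(y_i - 1) >= m, with ord(0) = +oo *)
Definition ord_sum_ge (F : fieldType) (ord : F -> int) (m : nat) (y : seq F) : Prop :=
  (exists2 a, a \in y & a = 1) \/ (m%:Z <= \sum_(a <- y) ord (a - 1)).

Definition KMm (F : fieldType) (ord : F -> int) (m n : nat) : KM F n -> Prop :=
  zspan (fun x => exists t : n.-tuple (Fx F),
                    ord_sum_ge ord m [seq val a | a <- t] /\ x = msym t).

Definition onePlus_KM (F : fieldType) (ord : F -> int) (k n : nat)
  : KM F n.+1 -> Prop :=
  zspan (fun x => exists (u : Fx F) (z : Free F n),
                    in_mpow ord k (val u - 1) /\ x = lmul u z).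

Arguments KMm {F} ord m n _.
Arguments onePlus_KM {F} ord k n _.

(* Main.v *)
Require Import Defs.
From mathcomp Require Import all_boot all_order all_algebra.
From mathcomp Require Import ring_quotient generic_quotient boolp freeg.
From mathcomp Require Import zify ring.
Import Order.TTheory GRing.Theory Num.Theory.
Local Open Scope ring_scope.
Local Open Scope quotient_scope.
Set Implicit Arguments. Unset Strict Implicit.

Section Bil.
Variable F : fieldType.
Local Notation Fx := (Fx F).
Definition fx1 : Fx := exist _ 1 (oner_neq0 F).
Definition fxinv (a : Fx) : Fx := exist _ (val a)^-1 (invr_neq0 (valP a)).
Lemma fxneg_subproof (a : Fx) : - val a != 0. Proof. by rewrite oppr_eq0 (valP a). Qed.
Definition fxneg (a : Fx) : Fx := exist _ (- val a) (fxneg_subproof a).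

Variable G : zmodType.
Variable B : Fx -> Fx -> G.
Hypothesis hL : forall a b c, B (fxmul a b) c = B a c + B b c.
Hypothesis hR : forall a b c, B a (fxmul b c) = B a b + B a c.
Hypothesis hS : forall a b, val a + val b = 1 -> B a b = 0.

Lemma B1l c : B fx1 c = 0.
Proof.
have e : fxmul fx1 fx1 = fx1 by apply: val_inj; rewrite /= mulr1.
have := hL fx1 fx1 c; rewrite e => h.
by apply: (@addrI _ (B fx1 c)); rewrite addr0 -h.
Qed.
Lemma B1r c : B c fx1 = 0.
Proof.
have e : fxmul fx1 fx1 = fx1 by apply: val_inj; rewrite /= mulr1.
have := hR c fx1 fx1; rewrite e => h.
by apply: (@addrI _ (B c fx1)); rewrite addr0 -h.
Qed.
Lemma BVl a c : B (fxinv a) c = - B a c.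
Proof.
have e : fxmul a (fxinv a) = fx1 by apply: val_inj; rewrite /= mulfV // (valP a).
have := hL a (fxinv a) c; rewrite e B1l => /eqP; rewrite eq_sym addr_eq0 => /eqP ->.
by rewrite opprK.
Qed.
Lemma BVr a c : B c (fxinv a) = - B c a.
Proof.
have e : fxmul a (fxinv a) = fx1 by apply: val_inj; rewrite /= mulfV // (valP a).
have := hR c a (fxinv a); rewrite e B1r => /eqP; rewrite eq_sym addr_eq0 => /eqP ->.
by rewrite opprK.
Qed.
Lemma Bneg a : B a (fxneg a) = 0.
Proof.
have [a1|a1] := eqVneq (val a) 1.
  have -> : a = fx1 by apply: val_inj.
  exact: B1l.
have h1 : 1 - val a != 0 by rewrite subr_eq0 eq_sym.
have ha := valP a; rewrite /= in ha.
have h2 : 1 - (val a)^-1 != 0.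
  by rewrite subr_eq0 eq_sym invr_eq1.
pose o : Fx := exist (fun x : F => x != 0) _ h1. pose o' : Fx := exist (fun x : F => x != 0) _ h2.
have e : fxneg a = fxmul o (fxinv o').
  apply: val_inj => /=.
  apply: (mulIf h2); rewrite -mulrA mulVf // mulr1 mulrBr mulr1 mulNr mulfV //.
  by rewrite opprK addrC.
rewrite e hR hS /=; last by rewrite addrC subrK.
rewrite add0r BVr -BVl hS //= addrC subrK //.
Qed.
Lemma Banti a b : B a b = - B b a.
Proof.
have := Bneg (fxmul a b).
have e1 : fxneg (fxmul a b) = fxmul (fxneg a) b by apply: val_inj; rewrite /= mulNr.
have e2 : fxneg (fxmul a b) = fxmul a (fxneg b) by apply: val_inj; rewrite /= mulrN.
rewrite hL {1}e1 e2 !hR !Bneg add0r addr0 => /eqP; rewrite addr_eq0 => /eqP //.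
Qed.

Lemma Bcomb u v C x : val u + val x = 1 ->
  val u * (val C)^-1 + val x * val v * (val C)^-1 = 1 ->
  B u v = - B C u + B C (fxmul x v) - B C C.
Proof.
move=> hux h.
have := hS (a := fxmul u (fxinv C)) (b := fxmul (fxmul x v) (fxinv C)) h.
rewrite hL !hR !BVl !BVr (hS hux) add0r (Banti u C).
move=> h2.
move: h2; set a := B u v; set b := B C u; set c := B C x; set d := B C v; set e := B C C.
move=> h2; apply/eqP; rewrite -subr_eq0 -h2; apply/eqP.
by rewrite !opprD !opprK !addrA.
Qed.

End Bil.

Section S.
Variable F : fieldType.
Variable N : nat.
Implicit Types t : N.-tuple (Fx F).

Lemma pi0 (x : Free F N) : milnor_rel x -> \pi_(KM F N) x = 0.
Proof.
move=> hx. have: (x - 0) \in (milnor_rel (F:=F) (n:=N)) by rewrite subr0.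
rewrite (@Quotient.idealrBE _ (milnor_rel (F:=F) (n:=N))) => /eqP ->.
by rewrite raddf0.
Qed.

Lemma rel_gen (x : Free F N) : milnor_relgen x -> milnor_rel x.
Proof. move=> h; apply/asboolP => H H0 HB HS; exact: HS. Qed.

Lemma msym_mul (t : N.-tuple (Fx F)) i a b :
  msym (tset t i (fxmul a b)) = msym (tset t i a) + msym (tset t i b).
Proof.
apply/eqP; rewrite -subr_eq0 opprD addrA; apply/eqP.
rewrite /msym -!raddfB; apply: pi0; apply: rel_gen; left; by exists t, i, a, b.
Qed.

Lemma msym_st (t : N.-tuple (Fx F)) (i j : 'I_N) :
  j = i.+1 :> nat -> val (tnth t i) + val (tnth t j) = 1 -> msym t = 0.
Proof. move=> h1 h2; apply: pi0; apply: rel_gen; right; by exists t, i, j. Qed.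

Lemma lmulE (u : Fx F) (s : N.-tuple (Fx F)) : lmul u << s >> = msym [tuple of u :: s].
Proof. by rewrite /lmul /lmul_free liftU scale1r. Qed.


Lemma tnth_tset (t : N.-tuple (Fx F)) i c k : tnth (tset t i c) k = if k == i then c else tnth t k.
Proof. by rewrite tnth_mktuple. Qed.
Lemma tset_id (t : N.-tuple (Fx F)) i : tset t i (tnth t i) = t.
Proof. by apply: eq_from_tnth => k; rewrite tnth_tset; case: eqP => // ->. Qed.
Lemma tset_tset (t : N.-tuple (Fx F)) i a b : tset (tset t i a) i b = tset t i b.
Proof. by apply: eq_from_tnth => k; rewrite !tnth_tset; case: eqP. Qed.
Lemma tset_C (t : N.-tuple (Fx F)) i j a b : i != j -> tset (tset t i a) j b = tset (tset t j b) i a.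
Proof.
move=> hij; apply: eq_from_tnth => k; rewrite !tnth_tset.
case: (eqVneq k i) => [->|//]; by rewrite (negbTE hij).
Qed.

Definition Bf (t : N.-tuple (Fx F)) (i j : 'I_N) (a b : Fx F) := msym (tset (tset t i a) j b).

Lemma Bf_L t i j : i != j -> forall a b c, Bf t i j (fxmul a b) c = Bf t i j a c + Bf t i j b c.
Proof. by move=> hij a b c; rewrite /Bf !(tset_C _ _ _ hij) msym_mul. Qed.
Lemma Bf_R t i j : forall a b c, Bf t i j a (fxmul b c) = Bf t i j a b + Bf t i j a c.
Proof. by move=> a b c; rewrite /Bf msym_mul. Qed.
Lemma Bf_id t i j : Bf t i j (tnth t i) (tnth t j) = msym t.
Proof. by rewrite /Bf !tset_id. Qed.

Lemma ord_neq (i j : 'I_N) : (i < j)%N -> i != j.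
Proof. by move=> h; apply/eqP => e; move: h; rewrite e ltnn. Qed.

Lemma adj_anti t (i j : 'I_N) : j = i.+1 :> nat ->
  msym t = - msym (tset (tset t i (tnth t j)) j (tnth t i)).
Proof.
move=> hj.
have hij : i != j by apply: ord_neq; rewrite hj.
rewrite -(Bf_id t i j).
apply: (Banti (Bf_L t hij) (Bf_R t i j)).
move=> a b hab; apply: (msym_st (i:=i) (j:=j)) => //.
by rewrite !tnth_tset eqxx (negbTE hij) eqxx.
Qed.

Lemma st_gen d : forall t (i j : 'I_N), val j = (i + d.+1)%N ->
  val (tnth t i) + val (tnth t j) = 1 -> msym t = 0.
Proof.
elim: d => [|d IH] t i j hj hs.
  by apply: (msym_st (i:=i) (j:=j)) => //; rewrite hj addn1.
have hj' : (j.-1 < N)%N by rewrite (leq_ltn_trans (leq_pred _)).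
pose j' : 'I_N := Ordinal hj'.
have ej : val j = (val j').+1 by rewrite /= hj addnS.
rewrite (adj_anti t ej).
have hj'j : j' != j by apply: ord_neq; rewrite ej.
have hij' : i != j' by apply: ord_neq; rewrite /= hj; lia.
have hij : i != j by apply: ord_neq; rewrite hj; lia.
rewrite (IH _ i j') ?oppr0 //; first by rewrite /= hj addnS.
by rewrite !tnth_tset (negbTE hij) (negbTE hij') (negbTE hj'j) eqxx.
Qed.

Lemma st_lt t (i j : 'I_N) : (i < j)%N -> val (tnth t i) + val (tnth t j) = 1 -> msym t = 0.
Proof.
move=> hij; apply: (st_gen (d := (j - i).-1)).
by rewrite prednK ?subn_gt0 // subnKC // ltnW.
Qed.

Lemma anti_lt t (i j : 'I_N) : (i < j)%N -> forall a b, Bf t i j a b = - Bf t i j b a.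
Proof.
move=> hlt; have hij := ord_neq hlt.
apply: (Banti (Bf_L t hij) (Bf_R t i j)).
move=> a b hab; apply: (st_lt (i:=i) (j:=j)) => //.
by rewrite !tnth_tset eqxx (negbTE hij) eqxx.
Qed.

Lemma st_Bf t (i j : 'I_N) : (i < j)%N -> forall a b, val a + val b = 1 -> Bf t i j a b = 0.
Proof.
move=> hlt a b hab; have hij := ord_neq hlt; apply: (st_lt (i:=i) (j:=j)) => //.
by rewrite !tnth_tset eqxx (negbTE hij) eqxx.
Qed.

End S.

Section Val.
Variable F : fieldType.
Variable ord : F -> int.
Hypothesis hord : discrete_valuation ord.

Lemma ordM x y : x != 0 -> y != 0 -> ord (x * y) = ord x + ord y.
Proof. by case: hord => h _ _; apply: h. Qed.
Lemma ord1 : ord 1 = 0.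
Proof.
have := ordM (oner_neq0 F) (oner_neq0 F); rewrite mulr1 => h.
by apply: (@addrI _ (ord 1)); rewrite -h addr0.
Qed.
Lemma ordN1 : ord (-1) = 0.
Proof.
have h : (-1 : F) != 0 by rewrite oppr_eq0 oner_neq0.
have := ordM h h; rewrite mulrNN mulr1 ord1 => /eqP.
rewrite eq_sym -mulr2n mulrn_eq0 /= => /eqP //.
Qed.
Lemma ordN x : x != 0 -> ord (- x) = ord x.
Proof.
move=> hx; rewrite -mulN1r ordM ?ordN1 ?add0r //.
by rewrite oppr_eq0 oner_neq0.
Qed.

Definition pos (y : Fx F) : nat :=
  if (val y != 1) && (0 <= ord (val y - 1)) then `|ord (val y - 1)|%N else 0%N.

Lemma pos_ge1 y : (1 <= pos y)%N -> val y != 1 /\ ord (val y - 1) = (pos y)%:Z.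
Proof.
rewrite /pos; case: ifP => // /andP [h1 h2] _; split => //.
by rewrite gez0_abs.
Qed.
Lemma pos_ge y : val y != 1 -> ord (val y - 1) <= (pos y)%:Z.
Proof.
move=> h; rewrite /pos h /=; case: ifP => [h2|/negbT]; first by rewrite gez0_abs.
by rewrite -ltNge => /ltW.
Qed.

Lemma comb_pos (u v : Fx F) : (1 <= pos u)%N -> (1 <= pos v)%N ->
  let xy := (1 - val u) * (1 - val v) in
  xy != 0 /\ 1 - xy != 0 /\ ord xy = (pos u + pos v)%N.
Proof.
move=> hu hv; have [u1 ou] := pos_ge1 hu; have [v1 ov] := pos_ge1 hv; move=> xy.
have hx : 1 - val u != 0 by rewrite subr_eq0 eq_sym.
have hy : 1 - val v != 0 by rewrite subr_eq0 eq_sym.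
have hxy : xy != 0 by rewrite mulf_neq0.
have oxy : ord xy = (pos u + pos v)%N.
  rewrite /xy ordM // -(opprB (val u)) -(opprB (val v)) !ordN ?subr_eq0 //.
  by rewrite ou ov.
split => //; split => //.
rewrite subr_eq0; apply/eqP => e; move: oxy; rewrite -e ord1.
move: hu hv; move: (pos u) (pos v) => a b; lia.
Qed.
End Val.

Lemma zspanN (G : zmodType) (S : G -> Prop) a : zspan S a -> zspan S (- a).
Proof. by move=> h; rewrite -sub0r; apply: zspanB => //; apply: zspan0. Qed.
Lemma zspanD (G : zmodType) (S : G -> Prop) a b : zspan S a -> zspan S b -> zspan S (a + b).
Proof. by move=> ha hb; rewrite -[b]opprK; apply: zspanB => //; apply: zspanN. Qed.
Lemma zspan_gen (G : zmodType) (S : G -> Prop) a : S a -> zspan S a.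
Proof. by move=> h H _ _ HS; apply: HS. Qed.
Lemma zspan_mono (G : zmodType) (S S' : G -> Prop) x :
  (forall a, S a -> zspan S' a) -> zspan S x -> zspan S' x.
Proof.
move=> hS hx; apply: hx; [exact: zspan0| exact: zspanB | exact: hS].
Qed.

Section Main.
Variable F : fieldType.
Variable ord : F -> int.
Hypothesis hord : discrete_valuation ord.
Variable n : nat.
Implicit Types t : n.+1.-tuple (Fx F).
Local Notation pos := (pos ord).

Lemma msym_comb t (i : 'I_n.+1) : (0 < i)%N ->
  (1 <= pos (tnth t ord0))%N -> (1 <= pos (tnth t i))%N ->
  exists C : Fx F, (pos (tnth t ord0) + pos (tnth t i) <= pos C)%N /\
  exists w1 w2 w3, msym t = - msym (tset (tset t ord0 C) i w1)
     + msym (tset (tset t ord0 C) i w2) - msym (tset (tset t ord0 C) i w3).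
Proof.
move=> hi hu hv.
have [hxy [hC oxy]] := comb_pos hord hu hv.
set u := tnth t ord0 in hu hxy hC oxy *; set v := tnth t i in hv hxy hC oxy *.
set xy := (1 - val u) * (1 - val v) in hxy hC oxy.
pose C : Fx F := exist (fun z : F => z != 0) _ hC.
have [u1 _] := pos_ge1 hu.
have hx : 1 - val u != 0 by rewrite subr_eq0 eq_sym.
pose x : Fx F := exist (fun z : F => z != 0) _ hx.
exists C; split.
  have e : val C - 1 = - xy by rewrite /= addrAC subrr add0r.
  have C1 : val C != 1 by rewrite -subr_eq0 e oppr_eq0.
  by have := pos_ge ord C1; rewrite e ordN // oxy lez_nat.
have hi0 : (ord0 : 'I_n.+1) != i by apply: ord_neq.
have h1 : val u + val x = 1 by rewrite /= addrC subrK.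
have h2 : val u * (val C)^-1 + val x * val v * (val C)^-1 = 1.
  rewrite -mulrDl (_ : _ + _ = val C) ?mulfV //.
  rewrite /= /xy; rewrite (_ : sval u = val u) // (_ : sval v = val v) //; ring.
have E := Bcomb (Bf_L t hi0) (Bf_R t ord0 i) (@st_Bf _ _ t ord0 i hi) h1 h2.
rewrite Bf_id in E.
by exists u, (fxmul x v), C.
Qed.

Definition PK k (y : KM F n.+1) := zspan (fun y => exists s : n.+1.-tuple (Fx F),
   (k <= pos (tnth s ord0))%N /\ y = msym s) y.

Lemma claim c : forall J : {set 'I_n.+1}, #|J| = c -> ord0 \notin J ->
  forall t k, (1 <= pos (tnth t ord0))%N ->
  (k <= pos (tnth t ord0) + \sum_(j in J) pos (tnth t j))%N -> PK k (msym t).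
Proof.
elim: c => [|c IH] J hc h0 t k ht hk.
  move/cards0_eq: hc => hJ; rewrite hJ big_set0 addn0 in hk.
  by apply: zspan_gen; exists t.
have /set0Pn [i iJ] : J != set0 by rewrite -card_gt0 hc.
have hc' : #|J :\ i| = c by move: hc; rewrite (cardsD1 i) iJ add1n => [[]].
have h0' : ord0 \notin J :\ i by rewrite in_setD1 (negbTE h0) andbF.
rewrite (big_setD1 i iJ) /= in hk.
have hi : (0 < i)%N.
  rewrite lt0n; apply/negP => /eqP e; move: h0; rewrite (_ : ord0 = i) ?iJ //.
  by apply: val_inj.
case: (posnP (pos (tnth t i))) => [p0|pi].
  by apply: (IH (J :\ i)) => //; rewrite p0 add0n in hk.
have [C [hCp [w1 [w2 [w3 ->]]]]] := msym_comb hi ht pi.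
have hi0 : (i == ord0) = false by apply/negbTE; rewrite eq_sym; apply: ord_neq.
have key : forall w, PK k (msym (tset (tset t ord0 C) i w)).
  move=> w; apply: (IH (J :\ i)) => //.
    rewrite !tnth_tset eqxx eq_sym hi0; lia.
  rewrite !tnth_tset eqxx eq_sym hi0.
  rewrite (eq_bigr (fun j => pos (tnth t j))); first by apply: leq_trans hk _; rewrite addnA leq_add2r.
  move=> j; rewrite in_setD1 => /andP [ji jJ].
  rewrite !tnth_tset (negbTE ji); case: eqP => // ej.
  by move: h0; rewrite -ej jJ.
have key' := key; rewrite /PK in key' *.
by apply: zspanB; [apply: zspanD; [apply: zspanN|]|]; apply: key'.
Qed.
End Main.

Lemma msym_one F N (t : N.-tuple (Fx F)) i : val (tnth t i) = 1 -> msym t = 0.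
Proof.
move=> h.
have -> : t = tset t i (fx1 F).
  by rewrite -{1}(tset_id t i); congr tset; apply: val_inj.
have := msym_mul t i (fx1 F) (fx1 F).
rewrite (_ : fxmul _ _ = fx1 F); last by apply: val_inj; rewrite /= mulr1.
by move=> e; apply: (@addrI _ (msym (tset t i (fx1 F)))); rewrite addr0 -e.
Qed.

Theorem lemma3p3 (F : fieldType) (ord : F -> int)
  (hord : discrete_valuation ord) (m n : nat) (hm : (1 <= m)%N) :
  forall x : KM F n.+1, KMm ord m n.+1 x -> onePlus_KM ord m n x.
Proof.
move=> x; apply: zspan_mono => y [t [hsum ->]].
suff: PK ord m (msym t).
  apply: zspan_mono => z [s [hs ->]].
  apply: zspan_gen; exists (tnth s ord0), << [tuple of behead s] >>; split.
    by right; have [_ ->] := pos_ge1 (leq_trans hm hs); rewrite lez_nat.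
  by rewrite lmulE -tuple_eta.
case: (boolP [exists i, val (tnth t i) == 1]) => [/existsP [i /eqP hi]|/existsPn hne].
  by rewrite (msym_one hi); apply: zspan0.
case: hsum => [[a ain a1]|hle].
  case/mapP: ain => y0 yt ay; case/tnthP: yt => i ti.
  by move: (hne i); rewrite -ti -ay a1 eqxx.
have hS : (m <= \sum_(i < n.+1) pos ord (tnth t i))%N.
  rewrite -lez_nat; apply: le_trans hle _; rewrite big_map big_tuple.
  rewrite -[X in _ <= X]intz sumMz; apply: ler_sum => i _; rewrite intz.
  exact: pos_ge.
have hJ0 : ord0 \notin [set~ (ord0 : 'I_n.+1)] by rewrite !inE eqxx.
rewrite (bigD1 ord0) //= in hS.
rewrite (eq_bigl (fun j => j \in [set~ ord0])) in hS; last by move=> j; rewrite !inE.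
case: (posnP (pos ord (tnth t ord0))) => [p0|pp].
  have [i /andP [i0 hi]] : exists i : 'I_n.+1, (i != ord0) && (0 < pos ord (tnth t i))%N.
    case: (boolP [exists i : 'I_n.+1, (i != ord0) && (0 < pos ord (tnth t i))%N]) => [/existsP //|/existsPn hn].
    exfalso; rewrite p0 add0n big1 in hS; first by move: hm hS; lia.
    move=> j; rewrite !inE => j0; move: (hn j); rewrite j0 /=; lia.
  have hlt : ((ord0 : 'I_n.+1) < i)%N by rewrite lt0n; apply: contra i0 => /eqP e; apply/eqP; apply: val_inj.
  have iJ : i \in [set~ ord0] by rewrite !inE.
  rewrite -(Bf_id t ord0 i) (anti_lt t hlt); apply: zspanN.
  apply: (claim hord (J := [set~ ord0] :\ i) erefl).
  - by rewrite in_setD1 (negbTE hJ0) andbF.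
  - by rewrite !tnth_tset (eq_sym ord0 i) (negbTE i0) eqxx.
  rewrite !tnth_tset (eq_sym ord0 i) (negbTE i0) eqxx.
  rewrite (eq_bigr (fun j => pos ord (tnth t j))).
    by move: hS; rewrite p0 add0n (big_setD1 i iJ).
  move=> j; rewrite in_setD1 => /andP [ji jJ].
  rewrite !tnth_tset (negbTE ji); case: eqP => // ej.
  by move: jJ; rewrite ej !inE eqxx.
by apply: (claim hord (J := [set~ ord0]) erefl).
Qed.
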